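(* Let $n_w\ge 1$, $i\ge 0$ and $w\ge 1$ be integers, and let $c_1,\dots,c_{n_w}$ be distinct symbols (clusters). Let $G$ be the directed graph (the pruned configuration graph) whose nodes are the pairs $(idx, C)$ with $1\le idx\le n_w+1$, $C\subseteq\{c_x \mid \max(1,idx-2i-2w+1)\le x<idx\}$ and $|C|\le i+w$, and whose edges are: left edges $(idx,C)\to(idx+1,C)$ for $idx\le n_w$; right edges $(idx,C)\to(idx+1,C\cup\{c_{idx}\})$ for $idx\le n_w$ whenever the target is a node; and horizontal edges $(idx,C)\to(idx,C\setminus\{c\})$ for $c\in C$. Then $G$ has at most $(n_w+1)2^{2i+2w-1}$ nodes and at most $(i+w+1)(n_w+1)2^{2i+2w-1}$ edges.
   Context: This graph represents the states $(idx, C_{buf})$ of a search for an ordering of clusters: $idx$ is the index of the next cluster to be processed and $C$ is the set of buffered (not yet placed) clusters; left edges place $c_{idx}$, right edges buffer $c_{idx}$, horizontal edges place a buffered cluster. *)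

(* Defs.v *)
From mathcomp Require Import all_boot.
Set Implicit Arguments. Unset Strict Implicit. Unset Printing Implicit Defensive.

(* Cluster c_x (1 <= x <= nw) is represented by the ordinal x : 'I_(nw.+2);
   an index idx (1 <= idx <= nw+1) is also an ordinal of 'I_(nw.+2). *)
Definition cfg_state (nw : nat) : finType := ('I_nw.+2 * {set 'I_nw.+2})%type.

(* The window {c_x | max(1, idx-2i-2w+1) <= x < idx}. Note
   max(1, idx-2i-2w+1) = maxn 1 ((idx+1) - (2i+2w)) with truncated subtraction. *)
Definition window (nw i w : nat) (idx : 'I_nw.+2) : {set 'I_nw.+2} :=
  [set x : 'I_nw.+2 | (maxn 1 ((idx + 1) - (2 * i + 2 * w)) <= x) && (x < idx)].

Definition is_node (nw i w : nat) (v : cfg_state nw) : bool :=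
  [&& 1 <= v.1, v.1 <= nw.+1, v.2 \subset window i w v.1 & #|v.2| <= i + w].

Definition is_edge (nw i w : nat) (u v : cfg_state nw) : bool :=
  [&& is_node i w u, is_node i w v &
   [||
       [&& u.1 <= nw, val v.1 == (val u.1).+1 & v.2 == u.2],
       [&& u.1 <= nw, val v.1 == (val u.1).+1 & v.2 == u.2 :|: [set u.1]]
     |
       (v.1 == u.1) && [exists c in u.2, v.2 == u.2 :\ c]]].

(* Main.v *)
Require Import Defs.
From mathcomp Require Import all_boot zify.

Lemma cardsU_le (T : finType) (A B : {set T}) : #|A :|: B| <= #|A| + #|B|.
Proof. by rewrite cardsU leq_subr. Qed.

Lemma card_range_le n lo hi :
  #|[set x : 'I_n | (lo <= x) && (x < hi)]| <= hi - lo.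
Proof.
rewrite cardE -(size_map val) -[hi - lo](size_iota lo).
apply: uniq_leq_size; first by rewrite map_inj_uniq ?enum_uniq //; exact: val_inj.
move=> y /mapP [x]; rewrite mem_enum inE => /andP [h1 h2] ->.
rewrite mem_iota h1 subnKC //; exact: leq_trans h1 (ltnW h2).
Qed.

Lemma window_card nw i w (idx : 'I_nw.+2) : 1 <= w ->
  #|window i w idx| <= 2 * i + 2 * w - 1.
Proof.
move=> hw; apply: leq_trans (card_range_le _ _ _) _; lia.
Qed.

Lemma nodes_idx nw i w (idx : 'I_nw.+2) : 1 <= w ->
  #|[set C | is_node i w (idx, C)]| <= (0 < idx) * 2 ^ (2 * i + 2 * w - 1).
Proof.
move=> hw; case: (posnP idx) => [h0|hp].
  rewrite mul0n leqn0 cards_eq0; apply/eqP/setP => C; rewrite !inE /is_node /= h0 //.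
rewrite mul1n; apply: leq_trans (_ : #|powerset (window i w idx)| <= _).
  by apply: subset_leq_card; apply/subsetP => C; rewrite !inE /is_node /= => /and4P [].
by rewrite card_powerset leq_pexp2l // window_card.
Qed.

Lemma nodes_sum nw i w :
  #|[set v : cfg_state nw | is_node i w v]| =
  \sum_(idx : 'I_nw.+2) #|[set C | is_node i w (idx, C)]|.
Proof.
rewrite -sum1_card (eq_bigr (fun idx => \sum_(C | is_node i w (idx, C)) 1)); last first.
  by move=> idx _; rewrite -sum1_card; apply: eq_bigl => C; rewrite inE.
rewrite pair_big_dep /=; apply: eq_bigl => -[a C]; by rewrite !inE.
Qed.

Lemma edges_sum nw i w :
  #|[set e : cfg_state nw * cfg_state nw | is_edge i w e.1 e.2]| =
  \sum_(u : cfg_state nw) #|[set v | is_edge i w u v]|.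
Proof.
rewrite -sum1_card (eq_bigr (fun u => \sum_(v | is_edge i w u v) 1)); last first.
  by move=> u _; rewrite -sum1_card; apply: eq_bigl => v; rewrite inE.
rewrite pair_big_dep /=; apply: eq_bigl => -[a C]; by rewrite !inE.
Qed.

Lemma outdeg nw i w (u : cfg_state nw) : is_node i w u ->
  #|[set v | is_edge i w u v]| <= i + w + 1.
Proof.
case: u => a C hu.
set L := [set v : cfg_state nw | (val v.1 == a.+1) && (v.2 == C)].
set R := [set v : cfg_state nw | [&& val v.1 == a.+1, v.2 == C :|: [set a] & #|v.2| <= i+w]].
set H := [set ((a, C :\ c) : cfg_state nw) | c in C].
have hL : #|L| <= 1.
  apply/card_le1_eqP => -[x1 y1] [x2 y2]; rewrite !inE /=.
  move=> /andP[/eqP e1 /eqP e2] /andP[/eqP e3 /eqP e4]; congr pair.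
    by apply: val_inj => /=; rewrite e1 e3.
  by rewrite e2 e4.
have hR : #|R| <= 1.
  apply/card_le1_eqP => -[x1 y1] [x2 y2]; rewrite !inE /=.
  move=> /and3P[/eqP e1 /eqP e2 _] /and3P[/eqP e3 /eqP e4 _]; congr pair.
    by apply: val_inj => /=; rewrite e1 e3.
  by rewrite e2 e4.
have hH : #|H| <= #|C| by apply: leq_imset_card.
have hsub : [set v | is_edge i w (a, C) v] \subset L :|: R :|: H.
  apply/subsetP => -[b D]; rewrite !inE /is_edge /= => /and3P [_ hv /or3P [| |]].
  - by move/and3P => [_ /eqP e1 /eqP e2]; rewrite e1 e2 !eqxx.
  - move/and3P => [_ /eqP e1 /eqP e2]; rewrite e1 e2 !eqxx /=.
    by move: hv; rewrite /is_node /= e2 => /and4P[_ _ _ ->]; rewrite orbT.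
  - case/andP => /eqP -> /existsP [c /andP [hc /eqP ->]]; apply/orP; right.
    by apply/imsetP; exists c.
have hcard := subset_leq_card hsub.
have hU := @cardsU_le _ (L :|: R) H.
have hU2 := @cardsU_le _ L R.
case: (ltnP #|C| (i+w)) => hc.
  move: hcard hU hU2 hL hR hH hc; lia.
have hR0 : R = set0.
  apply/setP => -[b D]; rewrite !inE /=; apply/negP => /and3P [_ /eqP e hcd].
  move: hcd; rewrite e setUC cardsU1.
  have -> : a \notin C.
    apply/negP => haC; move: hu; rewrite /is_node /= => /and4P [_ _ /subsetP hs _].
    by move: (hs _ haC); rewrite inE ltnn andbF.
  move: hc; lia.
have hR1 : #|R| = 0 by rewrite hR0 cards0.
move: hu; rewrite /is_node /= => /and4P [_ _ _ h].
apply: (leq_trans hcard); apply: (leq_trans hU).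
apply: (leq_trans (leq_add hU2 hH)); rewrite hR1 addn0 addnC.
exact: leq_add h hL.
Qed.

Theorem lemma3 (nw i w : nat) (hnw : 1 <= nw) (hw : 1 <= w) :
  #|[set v : cfg_state nw | is_node i w v]| <= nw.+1 * 2 ^ (2 * i + 2 * w - 1)
  /\
  #|[set e : cfg_state nw * cfg_state nw | is_edge i w e.1 e.2]|
    <= (i + w + 1) * nw.+1 * 2 ^ (2 * i + 2 * w - 1).
Proof.
have hn : #|[set v : cfg_state nw | is_node i w v]| <= nw.+1 * 2 ^ (2 * i + 2 * w - 1).
  rewrite nodes_sum; apply: (@leq_trans (\sum_(idx : 'I_nw.+2) (0 < idx) * 2 ^ (2 * i + 2 * w - 1))).
    by apply: leq_sum => idx _; apply: nodes_idx.
  rewrite big_ord_recl /= mul0n add0n.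
  under eq_bigr do rewrite mul1n.
  by rewrite sum_nat_const card_ord.
split => //.
rewrite edges_sum (bigID (fun u => is_node i w u)) /=.
rewrite [X in _ + X](eq_bigr (fun _ => 0)); last first.
  move=> u hu; apply/eqP; rewrite cards_eq0; apply/eqP/setP => v.
  by rewrite !inE /is_edge (negbTE hu).
rewrite big1_eq addn0.
apply: (@leq_trans (\sum_(u | is_node i w u) (i + w + 1))).
  by apply: leq_sum => u hu; apply: outdeg.
rewrite sum_nat_const -mulnA mulnC.
rewrite leq_mul2l; apply/orP; right; apply: leq_trans hn.
apply: subset_leq_card; apply/subsetP => v; rewrite inE /is_node => hv; exact: hv.
Qed.
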